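(* Let $(X,d)$ be a path-connected metric space, $x_0\in X$, $n\geq1$. For every $r>0$ there exists $(\mathscr{U},U_0)\in\mathrm{cov}(X)$ such that $\mathrm{Span}_n(\mathscr{U},x_0)\leq B_\rho(e,r)$, where $B_\rho(e,r)=\{a\in\pi_n(X,x_0)\mid\rho(a,e)<r\}$.
   Context: Identify $n$-loops with based maps $(S^n,d_0)\to(X,x_0)$, with uniform metric $\mu(\alpha,\beta)=\sup_t d(\alpha(t),\beta(t))$; $\rho(a,b)=\inf\{\mu(\alpha,\beta)\mid\alpha\in a,\beta\in b\}$ on $\pi_n(X,x_0)$, $e$ the identity. $\mathrm{cov}(X)$ is the set of pairs $(\mathscr{U},U_0)$ with $\mathscr{U}$ a locally finite open cover of $X$ and $U_0\in\mathscr{U}$ containing $x_0$. For an open cover $\mathscr{U}$, the $n$-th Spanier group $\mathrm{Span}_n(\mathscr{U},x_0)$ is the subgroup of $\pi_n(X,x_0)$ generated by all classes $[\gamma\ast f]$ where $\gamma:[0,1]\to X$ is a path with $\gamma(0)=x_0$, $f:(S^n,d_0)\to(X,\gamma(1))$ has image in some $U\in\mathscr{U}$, and $\gamma\ast f:(S^n,d_0)\to(X,x_0)$ is the path-conjugate (the standard map obtained by precomposing with a fixed retraction $S^n\times[0,1]\to S^n\times\{0\}\cup\{d_0\}\times[0,1]$ the map that is $f$ on $S^n\times\{0\}$ and runs along $\gamma$ on $\{d_0\}\times[0,1]$; it represents the image of $[f]$ under the change-of-basepoint isomorphism along $\gamma$). *)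

(* Defs.v *)
From HB Require Import structures.
From mathcomp Require Import all_boot all_order all_algebra.
From mathcomp Require Import all_classical all_reals all_analysis.
Unset Printing Implicit Defensive.
Import Order.TTheory GRing.Theory Num.Theory.
Import numFieldTopology.Exports numFieldNormedType.Exports.
Local Open Scope classical_set_scope.
Local Open Scope ring_scope.

(* n-loops are modelled as maps of the cube I^n (I^n/bd I^n = S^n) sending
   the boundary to the base point *)

Section Defs.
Context {R : realType} {X : metricType R}.

Definition path_connected :=
  forall x y : X, exists g : R -> X,
    {within `[0, 1], continuous g} /\ g 0 = x /\ g 1 = y.

Definition cube (n : nat) : set 'rV[R]_n :=
  [set s | forall i, 0 <= s ord0 i <= 1].
Definition cube_bdry (n : nat) : set 'rV[R]_n :=
  [set s | cube n s /\ exists i, s ord0 i = 0 \/ s ord0 i = 1].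

Definition nloop (n : nat) (x0 : X) (f : 'rV[R]_n -> X) :=
  {within cube n, continuous f} /\ (forall s, cube_bdry n s -> f s = x0).

Definition nhomotopic (n : nat) (x0 : X) (f g : 'rV[R]_n -> X) :=
  exists H : 'rV[R]_n * R -> X,
    {within cube n `*` `[0, 1], continuous H} /\
    (forall s, cube n s -> H (s, 0) = f s /\ H (s, 1) = g s) /\
    (forall s t, cube_bdry n s -> 0 <= t <= 1 -> H (s, t) = x0).

Definition hclass (n : nat) (x0 : X) (f : 'rV[R]_n -> X) : set ('rV[R]_n -> X) :=
  [set g | nloop n x0 g /\ nhomotopic n x0 f g].

Definition pin (n : nat) (x0 : X) : set (set ('rV[R]_n -> X)) :=
  [set a | exists f, nloop n x0 f /\ a = hclass n x0 f].

Definition pin_e (n : nat) (x0 : X) := hclass n x0 (fun _ : 'rV[R]_n => x0).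

Definition mu (n : nat) (f g : 'rV[R]_n -> X) : R :=
  sup [set mdist (f s) (g s) | s in cube n].
Definition rho (n : nat) (a b : set ('rV[R]_n -> X)) : R :=
  inf [set mu n p.1 p.2 | p in a `*` b].

Definition rset (n : nat) (s : 'rV[R]_n) (i0 : 'I_n) (v : R) : 'rV[R]_n :=
  \row_j (if j == i0 then v else s ord0 j).
Definition nconcat (n : nat) (i0 : 'I_n) (f g : 'rV[R]_n -> X) : 'rV[R]_n -> X :=
  fun s => if s ord0 i0 <= 2^-1 then f (rset n s i0 (2 * s ord0 i0))
           else g (rset n s i0 (2 * s ord0 i0 - 1)).
Definition nreverse (n : nat) (i0 : 'I_n) (f : 'rV[R]_n -> X) : 'rV[R]_n -> X :=
  fun s => f (rset n s i0 (1 - s ord0 i0)).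

(* subgroups of pi_n(X,x0) (group operations computed on representatives) *)
Definition is_subgroup (n : nat) (i0 : 'I_n) (x0 : X)
    (H : set (set ('rV[R]_n -> X))) :=
  H `<=` pin n x0 /\ H (pin_e n x0) /\
  (forall a b f g, H a -> H b -> a f -> b g -> H (hclass n x0 (nconcat n i0 f g))) /\
  (forall a f, H a -> a f -> H (hclass n x0 (nreverse n i0 f))).

Definition gen_subgroup (n : nat) (i0 : 'I_n) (x0 : X)
    (S : set (set ('rV[R]_n -> X))) : set (set ('rV[R]_n -> X)) :=
  [set a | forall H, is_subgroup n i0 x0 H -> S `<=` H -> H a].

(* path-conjugate gamma * f: f shrunk to the middle cube [1/4,3/4]^n,
   gamma run radially on the outer shell (gamma 0 on the boundary) *)
Definition cube_rad (n : nat) (s : 'rV[R]_n) : R :=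
  \big[Num.max/0]_(i < n) `|2 * s ord0 i - 1|.
Definition path_conj (n : nat) (gamma : R -> X) (f : 'rV[R]_n -> X) :
    'rV[R]_n -> X :=
  fun s => if cube_rad n s <= 2^-1 then f (\row_j (2 * s ord0 j - 2^-1))
           else gamma (2 - 2 * cube_rad n s).

Definition Span (n : nat) (i0 : 'I_n) (UU : set (set X)) (x0 : X) :=
  gen_subgroup n i0 x0
    [set a | exists (gamma : R -> X) (f : 'rV[R]_n -> X) (U : set X),
        {within `[0, 1], continuous gamma} /\ gamma 0 = x0 /\
        nloop n (gamma 1) f /\ UU U /\ f @` cube n `<=` U /\
        a = hclass n x0 (path_conj n gamma f)].

Definition open_cover (UU : set (set X)) :=
  (forall U, UU U -> open U) /\ (forall x, exists U, UU U /\ U x).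
Definition locally_finite (UU : set (set X)) :=
  forall x : X, exists N, nbhs x N /\ finite_set [set U | UU U /\ U `&` N !=set0].
Definition cov (x0 : X) : set (set (set X) * set X) :=
  [set p | open_cover p.1 /\ locally_finite p.1 /\ p.1 p.2 /\ p.2 x0].

End Defs.

(* Main.v *)
Require Import Defs.
From HB Require Import structures.
From mathcomp Require Import all_boot all_order all_algebra.
From mathcomp Require Import all_classical all_reals all_analysis.
From mathcomp.algebra_tactics Require Import ring lra.
From mathcomp Require Import wochoice.
Import Order.TTheory GRing.Theory Num.Theory.
Import numFieldTopology.Exports numFieldNormedType.Exports.
Local Open Scope classical_set_scope.
Local Open Scope ring_scope.
Section Cont.
Context {R : realType}.

Definition cw {T U : pseudoMetricType R} (A : set T) (f : T -> U) :=
  forall x, A x -> forall e : R, 0 < e -> exists2 d : R, 0 < d &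
    forall y, A y -> ball x d y -> ball (f x) e (f y).

Lemma cwP {T U : pseudoMetricType R} (A : set T) (f : T -> U) :
  cw A f <-> {within A, continuous f}.
Proof.
split.
- move=> h; apply/subspace_continuousP => x Ax.
  apply/cvg_ballP => e e0.
  have [d d0 hd] := h x Ax e e0.
  rewrite /within /prop_near1 /=. apply/nbhs_ballP; exists d => //= y bxy Ay.
  exact: hd.
- move=> /subspace_continuousP h x Ax e e0.
  have := h x Ax; move/cvg_ballP => /(_ e e0).
  rewrite /within /prop_near1 /= => /nbhs_ballP [d d0 hd].
  by exists d => // y Ay bxy; apply: hd.
Qed.

Lemma r_ballP (x y d : R) : ball x d y <-> `|x - y| < d.
Proof. by rewrite /ball /=. Qed.

Lemma rv_ballP n (s s' : 'rV[R]_n) d :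
  ball s d s' <-> 0 < d /\ forall i, `|s ord0 i - s' ord0 i| < d.
Proof.
split.
- move=> [d0 h]; split => // i; exact/r_ballP/(h ord0 i).
- move=> [d0 h]; split => // i j; rewrite (ord1 i); exact/r_ballP/(h j).
Qed.

Lemma p_ballP {T U : pseudoMetricType R} (p q : T * U) d :
  ball p d q <-> ball p.1 d q.1 /\ ball p.2 d q.2.
Proof. by []. Qed.

Lemma itv01P (t : R) : (t \in `[0, 1]) = (0 <= t <= 1).
Proof. by rewrite /= in_itv. Qed.

Lemma cw_sub {T U : pseudoMetricType R} (A B : set T) (f : T -> U) :
  A `<=` B -> cw B f -> cw A f.
Proof.
move=> AB h x Ax e e0; have [d d0 hd] := h x (AB _ Ax) e e0.
by exists d => // y Ay; apply: hd; apply: AB.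
Qed.

Lemma cw_eq {T U : pseudoMetricType R} (A : set T) (f g : T -> U) :
  (forall x, A x -> f x = g x) -> cw A f -> cw A g.
Proof.
move=> fg h x Ax e e0; have [d d0 hd] := h x Ax e e0.
by exists d => // y Ay; rewrite -!fg //; apply: hd.
Qed.

Lemma cw_comp {T U W : pseudoMetricType R} (A : set T) (B : set U)
  (phi : T -> U) (g : U -> W) :
  (forall x, A x -> B (phi x)) -> cw A phi -> cw B g -> cw A (g \o phi).
Proof.
move=> AB hphi hg x Ax e e0.
have [d1 d10 hd1] := hg (phi x) (AB _ Ax) e e0.
have [d2 d20 hd2] := hphi x Ax d1 d10.
by exists d2 => // y Ay bxy; apply: hd1; [apply: AB | apply: hd2].
Qed.

Lemma cw_compF {T U W : pseudoMetricType R} (A : set T) (B : set U)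
  (phi : T -> U) (g : U -> W) :
  (forall x, A x -> B (phi x)) -> cw A phi -> cw B g -> cw A (fun x => g (phi x)).
Proof. exact: cw_comp. Qed.

Lemma cw_cst {T U : pseudoMetricType R} (A : set T) (c : U) : cw A (fun _ => c).
Proof. by move=> x _ e e0; exists 1 => // y _ _; apply: ballxx. Qed.

Lemma lip_cw {T U : pseudoMetricType R} (A : set T) (phi : T -> U) (K : R) :
  0 < K -> (forall x y d, A x -> A y -> 0 < d -> ball x d y -> ball (phi x) (K * d) (phi y)) ->
  cw A phi.
Proof.
move=> K0 h x Ax e e0; exists (e / K); first by rewrite divr_gt0.
move=> y Ay bxy; have := h x y (e / K) Ax Ay ltac:(by rewrite divr_gt0) bxy.
by rewrite mulrC divfK // gt_eqF.
Qed.

Lemma minle1 (a b : R) : Num.min a b <= a. Proof. by rewrite ge_min lexx. Qed.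
Lemma minle2 (a b : R) : Num.min a b <= b. Proof. by rewrite ge_min lexx orbT. Qed.

Lemma ballmin1 {T : pseudoMetricType R} {x y : T} {a b : R} : ball x (Num.min a b) y -> ball x a y.
Proof. by apply: le_ball; exact: minle1. Qed.
Lemma ballmin2 {T : pseudoMetricType R} {x y : T} {a b : R} : ball x (Num.min a b) y -> ball x b y.
Proof. by apply: le_ball; exact: minle2. Qed.

Lemma cw_paste {T U : pseudoMetricType R} (A : set T) (phi : T -> R) (c : R)
  (F G : T -> U) :
  cw A phi -> cw (A `&` [set x | phi x <= c]) F -> cw (A `&` [set x | c <= phi x]) G ->
  (forall x, A x -> phi x = c -> F x = G x) ->
  cw A (fun x => if phi x <= c then F x else G x).
Proof.
move=> hphi hF hG hFG x Ax e e0.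
case: (ltgtP (phi x) c) => hx.
- have [d1 d10 hd1] := hphi x Ax (c - phi x) ltac:(lra).
  have [d2 d20 hd2] := hF x (conj Ax (ltW hx)) e e0.
  exists (Num.min d1 d2); first by rewrite lt_min d10.
  move=> y Ay /= /[dup] b1 b2.
  have hy : phi y <= c.
    have := hd1 y Ay (ballmin1 b1) => /r_ballP.
    rewrite ltr_norml; lra.
  rewrite hy; apply: hd2; first by split.
  exact: ballmin2 b2.
- have [d1 d10 hd1] := hphi x Ax (phi x - c) ltac:(lra).
  have [d2 d20 hd2] := hG x (conj Ax (ltW hx)) e e0.
  exists (Num.min d1 d2); first by rewrite lt_min d10.
  move=> y Ay /= /[dup] b1 b2.
  have hy : ~~ (phi y <= c).
    have := hd1 y Ay (ballmin1 b1) => /r_ballP.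
    rewrite ltr_norml -ltNge; lra.
  rewrite (negbTE hy); apply: hd2; first by split => //; move: hy; rewrite -ltNge => /ltW.
  exact: ballmin2 b2.
- have hx1 : phi x <= c by rewrite hx.
  have hx2 : c <= phi x by rewrite hx.
  have [d2 d20 hd2] := hF x (conj Ax hx1) e e0.
  have [d3 d30 hd3] := hG x (conj Ax hx2) e e0.
  exists (Num.min d2 d3); first by rewrite lt_min d20.
  move=> y Ay /= /[dup] b1 b2.
  case: (leP (phi y) c) => hy.
    by apply: hd2; [split | exact: ballmin1 b1].
  rewrite hFG //; apply: hd3; first by split => //; exact: ltW.
  exact: ballmin2 b2.
Qed.

End Cont.


Section Stone.
Context {R : realType} {X : metricType R}.

Lemma wo_fun (e : R) : 0 < e -> exists m : X -> X,
  (forall y, mdist (m y) y < e) /\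
  (forall y y', m y <> m y' -> e <= mdist (m y) y' \/ e <= mdist (m y') y).
Proof.
move=> e0.
have [Rw wo] := well_ordering_principle X.
have anti : antisymmetric Rw.
  have := @wo_chain_antisymmetric X Rw predT.
  move=> h a b; apply: h => //. by move=> A _; exact: wo.
have ex : forall y : X, exists z : X, mdist z y < e /\
    forall q, mdist q y < e -> Rw z q.
  move=> y.
  have ne : nonempty [pred q : X | `[< mdist q y < e >]].
    by exists y; rewrite inE /= mdistxx.
  have [z [[zA zlb] _]] := wo _ ne.
  exists z; split; first by move: zA; rewrite inE.
  by move=> q qy; apply: zlb; rewrite inE.
have [m hm] := choice ex.
exists m; split; first by move=> y; case: (hm y).
move=> y y' neq.
case: (leP e (mdist (m y) y')) => [h|h1]; first by left.
case: (leP e (mdist (m y') y)) => [h|h2]; first by right.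
exfalso; apply: neq; apply: anti.
by rewrite (proj2 (hm y) _ h2) (proj2 (hm y') _ h1).
Qed.


Lemma pow2_ge_nat (n : nat) : (n%:R : R) <= 2 ^+ n.
Proof.
elim: n => [|n ih]; first by rewrite expr0 ler01.
rewrite exprS -natr1.
have h1 : (1 : R) <= 2 ^+ n by rewrite exprn_ege1 // ler1n.
lra.
Qed.

Variables (e : R) (e0 : 0 < e) (m : X -> X).
Hypothesis hm1 : forall y, mdist (m y) y < e.
Hypothesis hm2 : forall y y', m y <> m y' -> e <= mdist (m y) y' \/ e <= mdist (m y') y.

Definition dl (n : nat) : R := e / 4 / 2 ^+ n.

Lemma dl_gt0 n : 0 < dl n.
Proof. by rewrite /dl !divr_gt0 // exprn_gt0. Qed.

Lemma dlS n : dl n.+1 = dl n / 2.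
Proof.
rewrite /dl exprS; have h : (2 : R) ^+ n != 0 by rewrite expf_neq0.
by field; rewrite h /=.
Qed.

Lemma dl_le n k : (n <= k)%N -> dl k <= dl n.
Proof.
move=> /subnK <-; elim: (k - n)%N => [|j ih]; first by rewrite add0n.
rewrite addSn dlS; have := dl_gt0 (j + n); lra.
Qed.

Lemma dl_lt2 n k : (n < k)%N -> 2 * dl k <= dl n.
Proof.
move=> nk; have := @dl_le n.+1 k nk; rewrite dlS; have := dl_gt0 n; lra.
Qed.

Lemma dl_3 n : 3 * dl n < e.
Proof.
have := @dl_le 0 n (leq0n n); have h4 : dl 0 * 4 = e by rewrite /dl expr0 divr1; field.
have := dl_gt0 n; lra.
Qed.

Lemma dl_small (eta : R) : 0 < eta -> exists n, dl n < eta.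
Proof.
move=> eta0.
have b0 : 0 <= e / 4 / eta by rewrite !divr_ge0 // ltW.
have := archi_boundP b0; set k := Num.bound _ => hk.
exists k; rewrite /dl.
have h2 := pow2_ge_nat k.
have p2 : 0 < (2 : R) ^+ k by rewrite exprn_gt0.
rewrite ltr_pdivrMr // -ltr_pdivrMl //.
rewrite mulrC in hk; apply: (lt_le_trans hk).
exact: h2.
Qed.

Definition C_of (A : set X) n := [set y | mdist (m y) y < e - 3 * dl n /\ ~ A y].
Fixpoint Acc n : set X := match n with
  | 0 => set0
  | k.+1 => Acc k `|` [set x | exists2 y, C_of (Acc k) k y & mdist y x < dl k]
  end.
Definition Cn n := C_of (Acc n) n.
Definition Wn n := [set x | exists2 y, Cn n y & mdist y x < dl n].
Definition Vpn (p : X) n := [set x | exists y, [/\ Cn n y, m y = p & mdist y x < dl n]].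
Definition UUs := [set U | exists p n, U = Vpn p n].

Lemma Acc_mono j i : (j <= i)%N -> Acc j `<=` Acc i.
Proof.
move=> /subnK <-; elim: (i - j)%N => [|k ih]; first by rewrite add0n.
by rewrite addSn => x /ih hx /=; left.
Qed.

Lemma W_Acc j i : (j < i)%N -> Wn j `<=` Acc i.
Proof. move=> ji x hx; apply: (@Acc_mono j.+1 i ji x); by right. Qed.

Lemma Acc_W n x : Acc n x -> exists2 j, (j < n)%N & Wn j x.
Proof.
elim: n => [//|n ih] /= [/ih [j jn hj]|hx]; first by exists j => //; exact: ltnW.
by exists n.
Qed.

Lemma C_notW i j y : (j < i)%N -> Cn i y -> ~ Wn j y.
Proof. by move=> ji [_ hA] hW; apply: hA; exact: (@W_Acc j i ji y hW). Qed.

Lemma V_open p n : open (Vpn p n).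
Proof.
rewrite openE => x [y [Cy my dyx]].
rewrite /interior; apply/nbhs_ballP.
have dd : 0 < dl n - mdist y x by lra.
suff h : ball x (dl n - mdist y x) `<=` Vpn p n by exists (dl n - mdist y x).
move=> z; rewrite ballEmdist /= => hz; exists y; split => //.
have := metric_triangle y x z; lra.
Qed.

Lemma V_small p n : Vpn p n `<=` [set z | mdist p z < e].
Proof.
move=> z [y [[h1 _] <- h3]] /=.
have := metric_triangle (m y) y z; have := dl_gt0 n; lra.
Qed.

Lemma V_W p n : Vpn p n `<=` Wn n.
Proof. by move=> z [y [h1 _ h3]]; exists y. Qed.

Lemma UU_cover x : exists p n, Vpn p n x.
Proof.
have := hm1 x => hx.
have [n hn] : exists n, dl n < (e - mdist (m x) x) / 3.
  by apply: dl_small; rewrite divr_gt0 //; lra.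
case: (pselect (Acc n x)) => [/Acc_W [j _ [y Cy dyx]]|nA].
  by exists (m y), j, y.
exists (m x), n, x; split => //; last by rewrite mdistxx dl_gt0.
split => //; lra.
Qed.

Lemma UU_locfin (x : X) : exists N : set X, nbhs x N /\
  finite_set [set U | UUs U /\ U `&` N !=set0].
Proof.
have [p [n Vx]] := UU_cover x.
have := V_open p n; rewrite openE => /(_ x Vx).
rewrite /interior => /nbhs_ballP [eta eta0 heta].
have [k0 hk0] := dl_small (eta / 2) ltac:(by rewrite divr_gt0).
pose k := maxn k0 n.+1.
have hk : dl k < eta / 2 by apply: le_lt_trans hk0; apply: dl_le; rewrite leq_maxl.
have nk : (n < k)%N by rewrite leq_maxr.
exists (ball x (dl k)); split; first exact: nbhsx_ballx (dl_gt0 k).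
have far : forall q i, (k <= i)%N -> Vpn q i `&` ball x (dl k) !=set0 -> False.
  move=> q i ki [z [[y [Cy _ dyz]] bz]].
  move: bz; rewrite ballEmdist /= => dxz.
  have dik := @dl_le k i ki.
  have bxy : ball x eta y.
    rewrite ballEmdist /=; have := metric_triangle x z y.
    rewrite (metric_sym z y); lra.
  have := heta y bxy => /V_W; exact: (@C_notW i n y (leq_trans nk ki) Cy).
have uniq : forall i q q', (i < k)%N -> Vpn q i `&` ball x (dl k) !=set0 ->
    Vpn q' i `&` ball x (dl k) !=set0 -> q = q'.
  move=> i q q' ik [z [[y [[Cy _] myq dyz]] bz]] [z' [[y' [[Cy' _] myq' dyz']] bz']].
  move: bz bz'; rewrite !ballEmdist /= => dxz dxz'.
  have h2 := @dl_lt2 i k ik.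
  have dyy : mdist y y' < 3 * dl i.
    have t1 := metric_triangle y z y'.
    have t2 := metric_triangle z x y'.
    have t3 := metric_triangle x z' y'.
    rewrite (metric_sym z x) in t2; rewrite (metric_sym z' y') in t3.
    lra.
  case: (pselect (q = q')) => // qq; exfalso.
  rewrite -myq -myq' in qq.
  case: (hm2 y y' qq) => h.
  - have := metric_triangle (m y) y y'; lra.
  - have := metric_triangle (m y') y' y; rewrite (metric_sym y' y); lra.
have [g hg] := @choice nat X (fun i g => forall q, (i < k)%N ->
    Vpn q i `&` ball x (dl k) !=set0 -> q = g) (fun i =>
  match pselect (exists q, (i < k)%N /\ Vpn q i `&` ball x (dl k) !=set0) with
  | left h => let: ex_intro q (conj ik hq) := h in
      ex_intro _ q (fun q' _ hq' => uniq _ _ _ ik hq' hq)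
  | right hno => ex_intro _ x (fun q ik hq => False_ind _ (hno (ex_intro _ q (conj ik hq))))
  end).
apply: (@sub_finite_set _ _ ((fun i => Vpn (g i) i) @` `I_k)).
  move=> U [[q [i ->]] hU].
  case: (ltnP i k) => ik; last by exfalso; exact: far ik hU.
  by exists i => //; rewrite -(hg _ _ ik hU).
by apply: finite_image; exact: finite_II.
Qed.

End Stone.

Lemma stone_cover {R : realType} {X : metricType R} (x0 : X) (e : R) : 0 < e ->
  exists p : set (set X) * set X, cov x0 p /\
    forall U, p.1 U -> exists c : X, U `<=` [set z | mdist c z < e].
Proof.
move=> e0; have [m [hm1 hm2]] := @wo_fun R X e e0.
have [p [n V0]] := @UU_cover R X e e0 m hm1 x0.
exists (UUs e m, Vpn e m p n); split.
  split; last first.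
  split; last by split => //; exists p, n.
  exact: UU_locfin.
  split; first by move=> U [q [i ->]]; exact: V_open.
  move=> x; have [q [i hx]] := @UU_cover R X e e0 m hm1 x; exists (Vpn e m q i); split => //.
  by exists q, i.
by move=> U [q [i ->]]; exists q; exact: V_small.
Qed.

Lemma half2 {R : realType} : 2 * 2^-1 = 1 :> R.
Proof. by rewrite divff // pnatr_eq0. Qed.

Section Homot.
Context {R : realType} {X : metricType R} (n : nat) (x0 : X).
Local Notation V := 'rV[R]_n.

Lemma cubeI (s : V) (t : R) : cube n s -> 0 <= t <= 1 -> (cube n `*` `[0, 1]) (s, t).
Proof. by move=> hs ht; split => //=; rewrite itv01P. Qed.

Lemma cubeI_inv (p : V * R) : (cube n `*` `[0, 1]) p -> cube n p.1 /\ 0 <= p.2 <= 1.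
Proof. by case => h1 h2; split => //; rewrite -itv01P. Qed.

Lemma bdry_cube {s : V} : cube_bdry n s -> cube n s.
Proof. by case. Qed.

Lemma rsetE (s : V) i0 v j : (rset n s i0 v) ord0 j = if j == i0 then v else s ord0 j.
Proof. by rewrite /rset mxE. Qed.

Lemma rset_cube (s : V) i0 v : cube n s -> 0 <= v <= 1 -> cube n (rset n s i0 v).
Proof. by move=> hs hv j; rewrite rsetE; case: ifP. Qed.

Lemma rset_bdry (s : V) i0 v : cube_bdry n s -> 0 <= v <= 1 ->
  (s ord0 i0 = 0 \/ s ord0 i0 = 1 -> v = 0 \/ v = 1) -> cube_bdry n (rset n s i0 v).
Proof.
move=> [hs [j hj]] hv himp; split; first exact: rset_cube.
case: (eqVneq j i0) => [ji|ji].
  by exists i0; rewrite rsetE eqxx; apply: himp; rewrite -ji.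
by exists j; rewrite rsetE (negbTE ji).
Qed.

Lemma rset_bdry01 (s : V) i0 v : cube n s -> v = 0 \/ v = 1 -> cube_bdry n (rset n s i0 v).
Proof.
move=> hs hv; split.
  by apply: rset_cube => //; case: hv => ->; rewrite ?lexx ?ler01.
by exists i0; rewrite rsetE eqxx.
Qed.

Lemma lipR_affine (a b d k c : R) : 0 < d -> `|a - b| < d -> 0 < k ->
  `|(k * a + c) - (k * b + c)| < k * d.
Proof.
move=> d0; rewrite !ltr_norml => /andP[h1 h2] k0; apply/andP; split; nra.
Qed.

Lemma nh_loops f g : nhomotopic n x0 f g -> nloop n x0 f /\ nloop n x0 g.
Proof.
move=> [H [cH [ends bd]]]; move/cwP: cH => cH.
have lip0 : forall t : R, 0 <= t <= 1 -> cw (cube n) (fun s : V => H (s, t)).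
  move=> t ht.
  apply: (@cw_compF R V (V * R)%type X (cube n) (cube n `*` `[0, 1]) (fun s : V => (s, t)) H).
  - by move=> s hs; apply: cubeI.
  - apply: (@lip_cw _ _ _ _ _ 1) => // s s' d _ _ d0 bss; rewrite mul1r.
    by split => //=; apply: ballxx.
  - exact: cH.
have c0 := lip0 0 ltac:(by rewrite lexx ler01).
have c1 := lip0 1 ltac:(by rewrite lexx ler01).
split; split.
- apply/cwP; apply: cw_eq c0 => s hs; exact: (ends s hs).1.
- move=> s hs; rewrite -(ends s (bdry_cube hs)).1; apply: bd => //; by rewrite lexx ler01.
- apply/cwP; apply: cw_eq c1 => s hs; exact: (ends s hs).2.
- move=> s hs; rewrite -(ends s (bdry_cube hs)).2; apply: bd => //; by rewrite lexx ler01.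
Qed.

Lemma nh_refl f : nloop n x0 f -> nhomotopic n x0 f f.
Proof.
move=> [cf bf]; exists (fun p => f p.1); split; last by split => [s _ | s t hs _] //; apply: bf.
apply/cwP; apply: (@cw_compF R (V * R)%type V X _ (cube n) fst f).
- by move=> p /cubeI_inv [].
- apply: (@lip_cw _ _ _ _ _ 1) => // p q d _ _ _ [h _]; by rewrite mul1r.
- exact/cwP.
Qed.

Lemma nh_sym f g : nhomotopic n x0 f g -> nhomotopic n x0 g f.
Proof.
move=> [H [cH [ends bd]]]; exists (fun p => H (p.1, 1 - p.2)); split; last split.
- apply/cwP; apply: (@cw_compF R (V * R)%type (V * R)%type X _ (cube n `*` `[0, 1]) (fun p : V * R => (p.1, 1 - p.2)) H).
  + move=> p /cubeI_inv [h1 h2]; apply: cubeI => //; lra.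
  + apply: (@lip_cw _ _ _ _ _ 1) => // p q d _ _ d0 [h1 h2]; rewrite mul1r; split => //=.
    move/r_ballP: h2 => h2; apply/r_ballP.
    have -> : 1 - p.2 - (1 - q.2) = - (p.2 - q.2) by ring.
    by rewrite normrN.
  + exact/cwP.
- move=> s hs /=; rewrite subr0 subrr; by case: (ends s hs).
- move=> s t hs ht /=; apply: bd => //; lra.
Qed.

Lemma nh_trans f g h : nhomotopic n x0 f g -> nhomotopic n x0 g h -> nhomotopic n x0 f h.
Proof.
have h2i := @half2 R.
move=> [H1 [cH1 [e1 b1]]] [H2 [cH2 [e2 b2]]].
move/cwP: cH1 => cH1; move/cwP: cH2 => cH2.
exists (fun p : V * R => if p.2 <= 2^-1 then H1 (p.1, 2 * p.2) else H2 (p.1, 2 * p.2 - 1)).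
split; last split.
- apply/cwP; apply: cw_paste.
  + apply: (@lip_cw _ _ _ _ _ 1) => // p q d _ _ _ [_ hb]; by rewrite mul1r.
  + apply: (@cw_compF R (V * R)%type (V * R)%type X _ (cube n `*` `[0, 1]) (fun p : V * R => (p.1, 2 * p.2)) H1); last exact: cH1.
    * move=> p [/cubeI_inv [h1 h2] h3]; rewrite /= in h3; apply: cubeI => //; lra.
    * apply: (@lip_cw _ _ _ _ _ 2) => // p q d _ _ d0 [hh1 hh2]; split => /=.
        by apply: le_ball hh1; lra.
      move/r_ballP: hh2 => hh2; apply/r_ballP.
      have := @lipR_affine p.2 q.2 d 2 0 d0 hh2 (ltr0Sn _ 1); by rewrite !addr0.
  + apply: (@cw_compF R (V * R)%type (V * R)%type X _ (cube n `*` `[0, 1]) (fun p : V * R => (p.1, 2 * p.2 - 1)) H2); last exact: cH2.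
    * move=> p [/cubeI_inv [h1 h2] h3]; rewrite /= in h3; apply: cubeI => //; lra.
    * apply: (@lip_cw _ _ _ _ _ 2) => // p q d _ _ d0 [hh1 hh2]; split => /=.
        by apply: le_ball hh1; lra.
      move/r_ballP: hh2 => hh2; apply/r_ballP.
      exact: (@lipR_affine p.2 q.2 d 2 (-1) d0 hh2 (ltr0Sn _ 1)).
  + move=> p /cubeI_inv [hp1 hp2] /= ->.
    rewrite h2i.
    have -> : 1 - 1 = 0 :> R by lra.
    by rewrite (e1 _ hp1).2 (e2 _ hp1).1.
- move=> s hs /=; rewrite mulr0 ifT; last by lra.
  split; first by case: (e1 s hs).
  rewrite ifF; last by apply/negbTE; rewrite -ltNge; lra.
  have -> : 2 * 1 - 1 = 1 :> R by lra.
  by case: (e2 s hs).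
- move=> s t hs ht /=; case: ifP => ht2; [apply: b1 | apply: b2] => //.
  + lra.
  + move/negbT: ht2; rewrite -ltNge => ht2; lra.
Qed.


Lemma lip_rset (i0 : 'I_n) (k c : R) : 1 <= k ->
  forall (p q : V * R) d, 0 < d -> ball p d q ->
  ball (rset n p.1 i0 (k * p.1 ord0 i0 + c), p.2) (k * d)
       (rset n q.1 i0 (k * q.1 ord0 i0 + c), q.2).
Proof.
move=> k1 p q d d0 [/rv_ballP [_ h1] /r_ballP h2]; split => /=.
- apply/rv_ballP; split; first nra.
  move=> j; rewrite !rsetE; case: ifP => _.
    by apply: lipR_affine => //; lra.
  have := h1 j; nra.
- apply/r_ballP; nra.
Qed.

Lemma nh_concat (i0 : 'I_n) f g f' g' : nhomotopic n x0 f f' -> nhomotopic n x0 g g' ->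
  nhomotopic n x0 (nconcat n i0 f g) (nconcat n i0 f' g').
Proof.
have h2i := @half2 R.
move=> [H1 [cH1 [e1 b1]]] [H2 [cH2 [e2 b2]]].
move/cwP: cH1 => cH1; move/cwP: cH2 => cH2.
exists (fun p : V * R => if p.1 ord0 i0 <= 2^-1
  then H1 (rset n p.1 i0 (2 * p.1 ord0 i0 + 0), p.2)
  else H2 (rset n p.1 i0 (2 * p.1 ord0 i0 + (-1)), p.2)).
split; last split.
- apply/cwP; apply: (@cw_paste _ _ _ _ (fun p : V * R => p.1 ord0 i0)).
  + apply: (@lip_cw _ _ _ _ _ 1) => // p q d _ _ _ [/rv_ballP [_ hb] _].
    by rewrite mul1r; apply/r_ballP.
  + apply: (@cw_compF R (V * R)%type (V * R)%type X _ (cube n `*` `[0, 1])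
      (fun p : V * R => (rset n p.1 i0 (2 * p.1 ord0 i0 + 0), p.2)) H1); last exact: cH1.
    * move=> p [/cubeI_inv [h1 h2] h3]; rewrite /= in h3; apply: cubeI => //.
      apply: rset_cube => //; have := h1 i0; lra.
    * apply: (@lip_cw _ _ _ _ _ 2) => // p q d _ _ d0 hb.
      by apply: lip_rset => //; lra.
  + apply: (@cw_compF R (V * R)%type (V * R)%type X _ (cube n `*` `[0, 1])
      (fun p : V * R => (rset n p.1 i0 (2 * p.1 ord0 i0 + (-1)), p.2)) H2); last exact: cH2.
    * move=> p [/cubeI_inv [h1 h2] h3]; rewrite /= in h3; apply: cubeI => //.
      apply: rset_cube => //; have := h1 i0; lra.
    * apply: (@lip_cw _ _ _ _ _ 2) => // p q d _ _ d0 hb.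
      by apply: lip_rset => //; lra.
  + move=> p /cubeI_inv [hp1 hp2] hpe.
    rewrite hpe h2i addr0.
    have -> : 1 + -1 = 0 :> R by lra.
    rewrite (b1 _ p.2 (@rset_bdry01 p.1 i0 1 hp1 (or_intror erefl)) hp2).
    by rewrite (b2 _ p.2 (@rset_bdry01 p.1 i0 0 hp1 (or_introl erefl)) hp2).
- move=> s hs /=; rewrite /nconcat; case: ifP => hsi.
  + rewrite addr0; split.
      by apply: (e1 _ _).1; apply: rset_cube => //; have := hs i0; lra.
    by apply: (e1 _ _).2; apply: rset_cube => //; have := hs i0; lra.
  + move/negbT: hsi; rewrite -ltNge => hsi.
    split.
      by apply: (e2 _ _).1; apply: rset_cube => //; have := hs i0; lra.
    by apply: (e2 _ _).2; apply: rset_cube => //; have := hs i0; lra.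
- move=> s t hs ht /=; have hsc := hs.1; have := hsc i0 => hsi.
  case: leP => hle.
  + apply: b1 => //; apply: rset_bdry => //; first lra.
    by case=> hs0; [left; rewrite hs0; lra | exfalso; lra].
  + apply: b2 => //; apply: rset_bdry => //; first lra.
    by case=> hs0; [exfalso; lra | right; rewrite hs0; lra].
Qed.

Lemma nh_rev (i0 : 'I_n) f f' : nhomotopic n x0 f f' ->
  nhomotopic n x0 (nreverse n i0 f) (nreverse n i0 f').
Proof.
move=> [H [cH [e1 b1]]]; move/cwP: cH => cH.
exists (fun p : V * R => H (rset n p.1 i0 ((-1) * p.1 ord0 i0 + 1), p.2)).
split; last split.
- apply/cwP; apply: (@cw_compF R (V * R)%type (V * R)%type X _ (cube n `*` `[0, 1])
      (fun p : V * R => (rset n p.1 i0 ((-1) * p.1 ord0 i0 + 1), p.2)) H); last exact: cH.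
  + move=> p /cubeI_inv [h1 h2]; apply: cubeI => //.
    apply: rset_cube => //; have := h1 i0; lra.
  + apply: (@lip_cw _ _ _ _ _ 1) => // p q d _ _ d0 [/rv_ballP [_ h1] /r_ballP h2].
    rewrite mul1r; split => /=.
    * apply/rv_ballP; split => // j; rewrite !rsetE; case: ifP => _ //.
      have := h1 i0; rewrite !ltr_norml => /andP [h3 h4]; apply/andP; split; lra.
    * exact/r_ballP.
- move=> s hs /=; rewrite /nreverse.
  have -> : -1 * s ord0 i0 + 1 = 1 - s ord0 i0 by ring.
  by split; [apply: (e1 _ _).1 | apply: (e1 _ _).2]; apply: rset_cube => //; have := hs i0; lra.
- move=> s t hs ht /=; have hsc := hs.1; have := hsc i0 => hsi.
  apply: b1 => //; apply: rset_bdry => //; first lra.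
  by case=> hs0; rewrite hs0; [right | left]; lra.
Qed.

Lemma nconcat_cst (i0 : 'I_n) : nconcat n i0 (fun _ : V => x0) (fun _ => x0) = (fun _ => x0).
Proof. by apply: funext => s; rewrite /nconcat; case: ifP. Qed.

Lemma nreverse_cst (i0 : 'I_n) : nreverse n i0 (fun _ : V => x0) = (fun _ => x0).
Proof. by []. Qed.



Local Notation rad := (cube_rad n).

Lemma rad_ge0 (s : V) : 0 <= rad s.
Proof.
rewrite /cube_rad; elim/big_ind: _ => //.
by move=> a b ha hb; rewrite le_max ha.
Qed.

Lemma rad_ge (s : V) i : `|2 * s ord0 i - 1| <= rad s.
Proof. exact: le_bigmax. Qed.

Lemma rad_le (s : V) c : 0 <= c -> (forall i, `|2 * s ord0 i - 1| <= c) -> rad s <= c.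
Proof. by move=> c0 h; apply: bigmax_le. Qed.

Lemma rad_lt (s : V) c : 0 < c -> (forall i, `|2 * s ord0 i - 1| < c) -> rad s < c.
Proof. by move=> c0 h; apply: bigmax_lt. Qed.

Lemma rad_cube (s : V) : cube n s -> rad s <= 1.
Proof.
move=> hs; apply: rad_le => // i; rewrite ler_norml; have := hs i; lra.
Qed.

Lemma rad_bdry (s : V) : cube_bdry n s -> rad s = 1.
Proof.
move=> [hs [j hj]]; apply/eqP; rewrite eq_le rad_cube //=.
apply: le_trans (rad_ge s j); case: hj => ->; rewrite ?mulr0 ?mulr1.
- by rewrite sub0r normrN normr1.
- have -> : 2 - 1 = 1 :> R by lra. by rewrite normr1.
Qed.

Lemma rad_lip (s s' : V) d : ball s d s' -> `|rad s - rad s'| < 2 * d.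
Proof.
move=> /rv_ballP [d0 h].
have key : forall a b : V, (forall i, `|a ord0 i - b ord0 i| < d) -> rad a < rad b + 2 * d.
  move=> a b hab; apply: rad_lt; first by have := rad_ge0 b; lra.
  move=> i; have := rad_ge b i; have := hab i.
  rewrite ltr_norml ler_norml => /andP[h1 h2] /andP [h3 h4].
  rewrite ltr_norml; apply/andP; split; lra.
have k1 := key s s' h.
have k2 : rad s' < rad s + 2 * d.
  apply: key => i; rewrite distrC; exact: h.
rewrite ltr_norml; apply/andP; split; lra.
Qed.

Definition shrink (s : V) : V := \row_j (2 * s ord0 j - 2^-1).

Lemma shrink_cube (s : V) : cube n s -> rad s <= 2^-1 -> cube n (shrink s).
Proof.
have h2i := @half2 R.
move=> hs hr j; rewrite /shrink mxE.
have := le_trans (rad_ge s j) hr; rewrite ler_norml => /andP [h1 h2]; lra.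
Qed.

Lemma rad_half (i0 : 'I_n) (s : V) : rad s = 2^-1 -> exists j, `|2 * s ord0 j - 1| = 2^-1.
Proof.
move=> hr.
have [j _ hj] := @eq_bigmax _ _ _ 0 i0 predT (fun i => `|2 * s ord0 i - 1|) isT
  (fun i _ => normr_ge0 _).
by exists j; rewrite -hj.
Qed.

Lemma shrink_bdry (i0 : 'I_n) (s : V) : cube n s -> rad s = 2^-1 -> cube_bdry n (shrink s).
Proof.
have h2i := @half2 R.
move=> hs hr; split; first by apply: shrink_cube => //; rewrite hr.
have [j hj] := @rad_half i0 s hr; exists j; rewrite /shrink mxE.
move: hj; case: (lerP 0 (2 * s ord0 j - 1)) => hsg.
- by rewrite ger0_norm // => hh; right; lra.
- by rewrite ltr0_norm // => hh; left; lra.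
Qed.

Lemma pc_loop (i0 : 'I_n) (gamma : R -> X) (f : V -> X) :
  {within `[0, 1], continuous gamma} -> gamma 0 = x0 -> nloop n (gamma 1) f ->
  nloop n x0 (path_conj n gamma f).
Proof.
have h2i := @half2 R.
move=> /cwP cg g0 [/cwP cf bf]; split.
- apply/cwP; rewrite /path_conj; apply: (@cw_paste _ _ _ _ rad).
  + apply: (@lip_cw _ _ _ _ _ 2) => // s s' d _ _ d0 hb.
    exact/r_ballP/(rad_lip s s' d hb).
  + apply: (@cw_compF R V V X _ (cube n) shrink f); last exact: cf.
    * by move=> s [hs hr]; apply: shrink_cube.
    * apply: (@lip_cw _ _ _ _ _ 2) => // s s' d _ _ d0 /rv_ballP [_ hb].
      apply/rv_ballP; split; first lra.
      move=> j; rewrite /shrink !mxE.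
      have -> : 2 * s ord0 j - 2^-1 - (2 * s' ord0 j - 2^-1) = 2 * (s ord0 j - s' ord0 j) by ring.
      by rewrite normrM ger0_norm // ltr_pM2l //; exact: hb.
  + apply: (@cw_compF R V R^o X _ (fun t => t \in `[0, 1]) (fun s => 2 - 2 * rad s) gamma); last exact: cg.
    * move=> s [hs hr]; rewrite /= in hr; rewrite itv01P; have := rad_cube s hs; lra.
    * apply: (@lip_cw _ _ _ _ _ 4) => // s s' d _ _ d0 hb.
      apply/r_ballP; have := rad_lip s s' d hb; rewrite !ltr_norml => /andP [h1 h2].
      apply/andP; split; lra.
  + move=> s hs hr; rewrite hr.
    have -> : 2 - 2 * 2^-1 = 1 :> R by lra.
    by apply: bf; apply: shrink_bdry.
- move=> s hs; rewrite /path_conj rad_bdry //.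
  case: leP => h; first by exfalso; lra.
  by have -> : 2 - 2 * 1 = 0 :> R by lra.
Qed.


Lemma min1_lip (a b : R) : `|Num.min 1 a - Num.min 1 b| <= `|a - b|.
Proof.
case: (leP 1 a) => ha; case: (leP 1 b) => hb.
- by rewrite subrr normr0.
- have h1 : 0 <= 1 - b by lra.
  have h2 : 0 <= a - b by lra.
  rewrite (ger0_norm h1) (ger0_norm h2); lra.
- have h1 : a - 1 <= 0 by lra.
  have h2 : a - b <= 0 by lra.
  rewrite (ler0_norm h1) (ler0_norm h2); lra.
- by [].
Qed.

Lemma ch_homot (gamma : R -> X) :
  {within `[0, 1], continuous gamma} -> gamma 0 = x0 ->
  nhomotopic n x0 (fun _ => x0) (path_conj n gamma (fun _ => gamma 1)).
Proof.
have h2i := @half2 R.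
move=> /cwP cg g0.
exists (fun p : V * R => gamma (p.2 * Num.min 1 (2 - 2 * rad p.1))).
split; last split.
- apply/cwP; apply: (@cw_compF R (V * R)%type R^o X _ (fun t => t \in `[0, 1])
    (fun p : V * R => p.2 * Num.min 1 (2 - 2 * rad p.1)) gamma); last exact: cg.
  + move=> p /cubeI_inv [h1 h2]; rewrite itv01P.
    have r1 := rad_cube _ h1; have r0 := rad_ge0 p.1.
    have m0 : 0 <= Num.min 1 (2 - 2 * rad p.1) by rewrite le_min ler01 /=; lra.
    have m1 : Num.min 1 (2 - 2 * rad p.1) <= 1 by exact: minle1.
    apply/andP; split; first by apply: mulr_ge0 => //; lra.
    apply: mulr_ile1 => //; lra.
  + apply: (@lip_cw _ _ _ _ _ 6) => // p q d hp hq d0 [hb1 /r_ballP hb2].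
    have [hp1 hp2] := cubeI_inv p hp; have [hq1 hq2] := cubeI_inv q hq.
    apply/r_ballP.
    set m := Num.min 1 (2 - 2 * rad p.1); set m' := Num.min 1 (2 - 2 * rad q.1).
    have hm : `|m - m'| < 4 * d.
      apply: le_lt_trans (min1_lip _ _) _.
      have := rad_lip _ _ _ hb1; rewrite !ltr_norml => /andP [h1 h2].
      apply/andP; split; lra.
    have m0 : 0 <= m by rewrite le_min ler01 /=; have := rad_cube _ hp1; lra.
    have m1 : m <= 1 by exact: minle1.
    move: hm hb2; rewrite !ltr_norml => /andP [h1 h2] /andP [h3 h4].
    have -> : p.2 * m - q.2 * m' = (p.2 - q.2) * m + q.2 * (m - m') by ring.
    have e1 : `|(p.2 - q.2) * m| <= d.
      rewrite normrM (ger0_norm m0); apply: le_trans (_ : `|p.2 - q.2| * 1 <= d).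
        by apply: ler_wpM2l.
      by rewrite mulr1 ltW // ltr_norml h3 h4.
    have e2 : `|q.2 * (m - m')| <= 4 * d.
      rewrite normrM; apply: le_trans (_ : 1 * `|m - m'| <= 4 * d).
        apply: ler_wpM2r => //; rewrite ger0_norm; lra.
      by rewrite mul1r ltW // ltr_norml h1 h2.
    move: e1 e2; rewrite !ler_norml => /andP [e1 e1'] /andP [e2 e2'].
    apply/andP; split; lra.
- move=> s hs /=; rewrite mul0r g0 mul1r; split => //.
  rewrite /path_conj; case: leP => h.
    by rewrite min_l //; lra.
  by rewrite min_r //; lra.
- move=> s t hs ht /=; rewrite rad_bdry //.
  by rewrite min_r; [rewrite (_ : 2 - 2 * 1 = 0 :> R) ?mulr0 //; lra | lra].
Qed.


Arguments nh_trans {f g h}.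
Arguments nh_sym {f g}.
Arguments nh_refl {f}.
Arguments nh_loops {f g}.
Arguments nh_concat i0 {f g f' g'}.
Arguments nh_rev i0 {f f'}.
Arguments pc_loop i0 {gamma f}.
Arguments ch_homot {gamma}.
Arguments rset_cube {s} i0 {v}.
Arguments shrink_cube {s}.

Lemma cube0 : cube n (0 : V).
Proof. by move=> i; rewrite mxE lexx ler01. Qed.

Lemma mu_ge0 (f g : V -> X) : 0 <= mu n f g.
Proof.
rewrite /mu; set E := [set _ | _ in _].
have hE : E (mdist (f 0) (g 0)) by exists 0 => //; exact: cube0.
case: (pselect (has_sup E)) => hs.
  apply: le_trans (mdist_ge0 (f 0) (g 0)) _.
  by apply: sup_upper_bound.
by rewrite sup_out.
Qed.

Lemma mu_le (f g : V -> X) c : (forall s, cube n s -> mdist (f s) (g s) <= c) -> mu n f g <= c.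
Proof.
move=> h; rewrite /mu; apply: ge_sup.
  by exists (mdist (f 0) (g 0)); exists 0 => //; exact: cube0.
by move=> y [s hs <-]; apply: h.
Qed.

Lemma rho_le (a b : set (V -> X)) f g : a f -> b g -> rho n a b <= mu n f g.
Proof.
move=> af bg; rewrite /rho; apply: ge_inf.
  by exists 0 => y [pq _ <-]; apply: mu_ge0.
by exists (f, g).
Qed.

Lemma hclass_nh f0 f g : hclass n x0 f0 f -> hclass n x0 f0 g -> nhomotopic n x0 f g.
Proof. by move=> [_ h1] [_ h2]; apply: nh_trans (nh_sym h1) h2. Qed.

Lemma hclass_self f : nloop n x0 f -> hclass n x0 f f.
Proof. by move=> hf; split => //; apply: nh_refl. Qed.

Lemma cst_loop : nloop n x0 (fun _ : V => x0).
Proof. by split => //; apply/cwP; apply: cw_cst. Qed.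


Arguments rho_le {a b f g}.
Arguments mu_le {f g c}.
Arguments hclass_nh {f0 f g}.
Arguments hclass_self {f}.

Lemma main_in (hn : (0 < n)%N) (r : R) : 0 < r ->
  exists p, cov x0 p /\
    Span n (Ordinal hn) p.1 x0 `<=`
      [set a | pin n x0 a /\ rho n a (pin_e n x0) < r].
Proof.
move=> r0.
set i0 := Ordinal hn.
have r40 : 0 < r / 4 by rewrite divr_gt0.
have [p [hcov hsmall]] := @stone_cover R X x0 (r / 4) r40.
exists p; split => //.
pose Hs : set (set ('rV[R]_n -> X)) := [set a | pin n x0 a /\
  exists (al be : 'rV[R]_n -> X) (c : R), [/\ a al, pin_e n x0 be, c < r &
    forall s, cube n s -> mdist (al s) (be s) <= c]].
have HsT : Hs `<=` [set a | pin n x0 a /\ rho n a (pin_e n x0) < r].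
  move=> a [pa [al [be [c [aal ebe cr hb]]]]]; split => //.
  apply: le_lt_trans (rho_le aal ebe) _.
  by apply: le_lt_trans cr; apply: mu_le.
have eloop : forall be, pin_e n x0 be -> nhomotopic n x0 (fun _ => x0) be.
  by move=> be [_ h].
have Hsub : is_subgroup n i0 x0 Hs.
  split; first by move=> a [].
  split.
    split; first by exists (fun _ => x0); split => //; exact: cst_loop.
    exists (fun _ => x0), (fun _ => x0), 0; split => //; first exact: hclass_self cst_loop.
      exact: hclass_self cst_loop.
    by move=> s _; rewrite mdistxx.
  split.
  - move=> a b f g [[f0 [hf0 ->]] [al [be [c [aal ebe cr hb]]]]]
      [[g0 [hg0 ->]] [al' [be' [c' [aal' ebe' cr' hb']]]]] af bg.
    have nf := hclass_nh af aal; have ng := hclass_nh bg aal'.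
    have nb := nh_concat i0 (eloop _ ebe) (eloop _ ebe').
    rewrite nconcat_cst in nb.
    have nfg := nh_concat i0 nf ng.
    have [lfg lal] := nh_loops nfg.
    have [_ lbe] := nh_loops nb.
    split; first by exists (nconcat n i0 f g).
    exists (nconcat n i0 al al'), (nconcat n i0 be be'), (Num.max c c'); split => //.
    + by rewrite gt_max cr cr'.
    + move=> s hs; rewrite /nconcat; have := hs i0 => hsi.
      case: ifP => h.
      * apply: le_trans (hb _ _) _; last by rewrite le_max lexx.
        by apply: rset_cube => //; move/idP: h => h; lra.
      * apply: le_trans (hb' _ _) _; last by rewrite le_max lexx orbT.
        by apply: rset_cube => //; move/negbT: h; rewrite -ltNge => h; lra.
  - move=> a f [[f0 [hf0 ->]] [al [be [c [aal ebe cr hb]]]]] af.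
    have nf := hclass_nh af aal.
    have nb := nh_rev i0 (eloop _ ebe).
    rewrite nreverse_cst in nb.
    have nfr := nh_rev i0 nf.
    have [lf lal] := nh_loops nfr.
    have [_ lbe] := nh_loops nb.
    split; first by exists (nreverse n i0 f).
    exists (nreverse n i0 al), (nreverse n i0 be), c; split => //.
    move=> s hs; rewrite /nreverse; apply: hb; apply: rset_cube => //.
    have := hs i0; lra.
have SHs : [set a | exists (gamma : R -> X) (f : 'rV[R]_n -> X) (U : set X),
        {within `[0, 1], continuous gamma} /\ gamma 0 = x0 /\
        nloop n (gamma 1) f /\ p.1 U /\ f @` cube n `<=` U /\
        a = hclass n x0 (path_conj n gamma f)] `<=` Hs.
  move=> a [gamma [f [U [cg [g0 [lf [UU [fU ->]]]]]]]].
  have lpc := pc_loop i0 cg g0 lf.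
  have ch := ch_homot cg g0.
  have [_ lbe] := nh_loops ch.
  split; first by exists (path_conj n gamma f).
  exists (path_conj n gamma f), (path_conj n gamma (fun _ => gamma 1)), (r / 2).
  split => //; first exact: hclass_self.
    lra.
  have [c hc] := hsmall U UU.
  have hz : cube_bdry n (0 : 'rV[R]_n).
    split; first exact: cube0.
    by exists i0; left; rewrite mxE.
  have fz : f 0 = gamma 1 by apply: lf.2.
  have fzU : U (f 0) by apply: fU; exists 0 => //; exact: cube0.
  move=> s hs; rewrite /path_conj; case: ifP => h.
  - rewrite -fz.
    have hsh : U (f (shrink s)).
      by apply: fU; exists (shrink s) => //; apply: shrink_cube => //; rewrite ?h.
    have := hc _ hsh; have := hc _ fzU; rewrite /=.
    have := metric_triangle (f (shrink s)) c (f 0).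
    rewrite (metric_sym (f (shrink s)) c) /shrink; lra.
  - rewrite mdistxx; lra.
move=> a hspan; apply: HsT; exact: hspan Hs Hsub SHs.
Qed.

End Homot.

Theorem proposition5p11 (R : realType) (X : metricType R) (x0 : X) (n : nat)
    (hn : (0 < n)%N) :
  @path_connected R X ->
  forall r : R, 0 < r ->
  exists p, cov x0 p /\
    Span n (Ordinal hn) p.1 x0 `<=`
      [set a | pin n x0 a /\ rho n a (pin_e n x0) < r].
Proof. by move=> _ r r0; exact: main_in. Qed.
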